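(* Let $(q(t),p(t))$ be an orbit of $X_H$ in rotating coordinates. If $(q_1+\mu)p_2-q_2p_1>\mu(q_1+\mu)$ along the orbit, then the curve $q(t)$ is retrograde with respect to $e(t)$. If $(q_1+\mu)p_2-q_2p_1<\mu(q_1+\mu)$ along the orbit, then it is direct.
   Context: For $\mu\in[0,1]$, $H(q,p)=\tfrac12|p|^2+q_1p_2-q_2p_1-\frac{1-\mu}{|q+(\mu,0)|}-\frac{\mu}{|q-(1-\mu,0)|}$ on $(\mathbb{R}^2\setminus\{(-\mu,0),(1-\mu,0)\})\times\mathbb{R}^2$, with $\dot q=\partial H/\partial p$, $\dot p=-\partial H/\partial q$. Let $R_t=\begin{pmatrix}\cos t&-\sin t\\ \sin t&\cos t\end{pmatrix}$. Sidereal coordinates are $\bar q(t)=R_{-t}q(t)$, and $\bar e(t)=R_{-t}(-\mu,0)$ (with $e(t)$ the corresponding point $(-\mu,0)$ in rotating coordinates). A path is called retrograde with respect to $e(t)$ if the angle $\phi(t)=\arg\big(\bar q_1(t)-\bar e_1(t)+i(\bar q_2(t)-\bar e_2(t))\big)$ is increasing, and prograde (direct) if it is decreasing. *)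

(* Defs.v *)
From Stdlib Require Import Reals Lra.
From Coquelicot Require Import Coquelicot.
Open Scope R_scope.

(* The Hamiltonian of the rotating Kepler / restricted three-body problem,
   H(q,p) = |p|^2/2 + q1 p2 - q2 p1 - (1-mu)/|q+(mu,0)| - mu/|q-(1-mu,0)|. *)
Definition H (mu q1 q2 p1 p2 : R) : R :=
  (p1 ^ 2 + p2 ^ 2) / 2 + q1 * p2 - q2 * p1
  - (1 - mu) / sqrt ((q1 + mu) ^ 2 + q2 ^ 2)
  - mu / sqrt ((q1 - (1 - mu)) ^ 2 + q2 ^ 2).

Definition in_I (a b : Rbar) (t : R) : Prop := Rbar_lt a t /\ Rbar_lt t b.

(* (q1,q2,p1,p2) : I -> R^4 is an orbit of X_H, i.e.
   qdot = dH/dp, pdot = -dH/dq, and q avoids the two collision points. *)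
Definition is_orbit (mu : R) (a b : Rbar) (q1 q2 p1 p2 : R -> R) : Prop :=
  forall t, in_I a b t ->
    (q1 t, q2 t) <> (- mu, 0) /\ (q1 t, q2 t) <> (1 - mu, 0) /\
    (exists v, is_derive q1 t v /\
       is_derive (fun x => H mu (q1 t) (q2 t) x (p2 t)) (p1 t) v) /\
    (exists v, is_derive q2 t v /\
       is_derive (fun x => H mu (q1 t) (q2 t) (p1 t) x) (p2 t) v) /\
    (exists v, is_derive p1 t (- v) /\
       is_derive (fun x => H mu x (q2 t) (p1 t) (p2 t)) (q1 t) v) /\
    (exists v, is_derive p2 t (- v) /\
       is_derive (fun x => H mu (q1 t) x (p1 t) (p2 t)) (q2 t) v).

Definition rot (t : R) (x : R * R) : R * R :=
  (cos t * fst x - sin t * snd x, sin t * fst x + cos t * snd x).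

Definition qbar (q1 q2 : R -> R) (t : R) : R * R := rot (- t) (q1 t, q2 t).
Definition ebar (mu t : R) : R * R := rot (- t) (- mu, 0).

Definition is_angle_lift (mu : R) (a b : Rbar) (q1 q2 : R -> R) (phi : R -> R)
  : Prop :=
  forall t, in_I a b t ->
    continuous phi t /\
    let d1 := fst (qbar q1 q2 t) - fst (ebar mu t) in
    let d2 := snd (qbar q1 q2 t) - snd (ebar mu t) in
    d1 = sqrt (d1 ^ 2 + d2 ^ 2) * cos (phi t) /\
    d2 = sqrt (d1 ^ 2 + d2 ^ 2) * sin (phi t).

Definition retrograde (mu : R) (a b : Rbar) (q1 q2 : R -> R) : Prop :=
  exists phi, is_angle_lift mu a b q1 q2 phi /\
    forall s t, in_I a b s -> in_I a b t -> s < t -> phi s < phi t.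

Definition prograde (mu : R) (a b : Rbar) (q1 q2 : R -> R) : Prop :=
  exists phi, is_angle_lift mu a b q1 q2 phi /\
    forall s t, in_I a b s -> in_I a b t -> s < t -> phi t < phi s.

(* Main.v *)
Require Import Defs.
From Stdlib Require Import Reals Lra.
From Coquelicot Require Import Coquelicot.
Open Scope R_scope.

Lemma in_I_conv a b s t c : in_I a b s -> in_I a b t -> s <= c <= t -> in_I a b c.
Proof. destruct a, b; unfold in_I; simpl; intuition lra. Qed.

Lemma in_I_ex a b : Rbar_lt a b -> exists t, in_I a b t.
Proof.
  destruct a as [a| |], b as [b| |]; simpl; try tauto; intros.
  - exists ((a+b)/2); unfold in_I; simpl; lra.
  - exists (a+1); unfold in_I; simpl; lra.
  - exists (b-1); unfold in_I; simpl; lra.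
  - exists 0; unfold in_I; simpl; auto.
Qed.

Lemma in_I_open a b t : in_I a b t -> locally t (in_I a b).
Proof.
  intros Ht. apply (open_and _ _ (open_Rbar_gt a) (open_Rbar_lt b)). exact Ht.
Qed.

Lemma cont_of_der f t v : is_derive f t v -> continuity_pt f t.
Proof.
  intros H. apply continuity_pt_filterlim. apply (ex_derive_continuous (K:=R_AbsRing) (V:=R_NormedModule)). exists v; exact H.
Qed.

Lemma mvt_I a b g dg s t : (forall u, in_I a b u -> is_derive g u (dg u)) ->
  in_I a b s -> in_I a b t -> s < t ->
  exists c, in_I a b c /\ g t - g s = dg c * (t - s).
Proof.
  intros Hd Hs Ht Hst.
  destruct (MVT_gen g s t dg) as [c [Hc Hc2]].
  - intros u Hu. apply Hd. rewrite Rmin_left, Rmax_right in Hu by lra.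
    apply (in_I_conv a b s t); auto; lra.
  - intros u Hu. rewrite Rmin_left, Rmax_right in Hu by lra.
    apply (cont_of_der _ _ (dg u)). apply Hd. apply (in_I_conv a b s t); auto.
  - rewrite Rmin_left, Rmax_right in Hc by lra. exists c; split; auto.
    apply (in_I_conv a b s t); auto.
Qed.

Lemma incr_I a b g dg : (forall u, in_I a b u -> is_derive g u (dg u) /\ 0 < dg u) ->
  forall s t, in_I a b s -> in_I a b t -> s < t -> g s < g t.
Proof.
  intros Hd s t Hs Ht Hst.
  destruct (mvt_I a b g dg s t) as [c [Hc E]]; auto.
  - intros u Hu; apply Hd; auto.
  - destruct (Hd c Hc) as [_ P]. assert (0 < dg c * (t - s)) by (apply Rmult_lt_0_compat; lra). lra.
Qed.

Lemma const_I a b g : (forall u, in_I a b u -> is_derive g u 0) ->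
  forall s t, in_I a b s -> in_I a b t -> g s = g t.
Proof.
  intros Hd s t Hs Ht.
  destruct (Rtotal_order s t) as [H|[H|H]].
  - destruct (mvt_I a b g (fun _ => 0) s t) as [c [Hc E]]; auto. lra.
  - subst; auto.
  - destruct (mvt_I a b g (fun _ => 0) t s) as [c [Hc E]]; auto. lra.
Qed.

Lemma polar_ex x y : 0 < x ^ 2 + y ^ 2 -> exists th,
  x = sqrt (x ^ 2 + y ^ 2) * cos th /\ y = sqrt (x ^ 2 + y ^ 2) * sin th.
Proof.
  intros Hp. set (s := sqrt (x ^ 2 + y ^ 2)).
  assert (Hs : 0 < s) by (apply sqrt_lt_R0; auto).
  assert (Hs2 : s * s = x ^ 2 + y ^ 2) by (apply sqrt_sqrt; lra).
  set (c := x / s).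
  assert (Hc : -1 <= c <= 1).
  { unfold c. assert (Rabs x <= s).
    { apply Rsqr_incr_0_var. unfold Rsqr. rewrite Hs2. rewrite <- Rabs_mult.
      rewrite Rabs_right by nra. nra. lra. }
    split; [apply (Rmult_le_reg_r s); [lra|]; unfold Rdiv; rewrite Rmult_assoc, Rinv_l, Rmult_1_r by lra;
      apply Rabs_le_between in H; lra | apply (Rmult_le_reg_r s); [lra|]; unfold Rdiv; rewrite Rmult_assoc, Rinv_l, Rmult_1_r by lra;
      apply Rabs_le_between in H; lra]. }
  assert (Hsq : sqrt (1 - c²) = Rabs y / s).
  { replace (1 - c²) with (Rsqr (Rabs y / s)).
    - apply sqrt_Rsqr. apply Rmult_le_pos; [apply Rabs_pos|]. left; apply Rinv_0_lt_compat; lra.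
    - unfold Rsqr, c.
      replace (Rabs y / s * (Rabs y / s)) with ((Rabs y * Rabs y) / (s*s)) by (field; lra).
      rewrite <- Rabs_mult, Rabs_right by nra. rewrite Hs2.
      replace (x/s*(x/s)) with (x*x/(s*s)) by (field; lra). rewrite Hs2. field. lra. }
  destruct (Rle_or_lt 0 y) as [Hy|Hy].
  - exists (acos c). rewrite cos_acos, sin_acos, Hsq by auto. rewrite Rabs_right by lra.
    fold s. unfold c. split; field; lra.
  - exists (- acos c). rewrite cos_neg, sin_neg, cos_acos, sin_acos, Hsq by auto.
    rewrite Rabs_left by lra. fold s. unfold c. split; field; lra.
Qed.

Lemma cont_pt_to f t : continuity_pt f t -> continuous f t.
Proof. intros H; apply continuity_pt_filterlim in H; exact H. Qed.

Lemma lift (a b : Rbar) (x y X Y : R -> R) : Rbar_lt a b ->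
  (forall t, in_I a b t -> is_derive x t (X t) /\ is_derive y t (Y t) /\
     continuity_pt X t /\ continuity_pt Y t /\ 0 < x t ^ 2 + y t ^ 2) ->
  exists th, forall t, in_I a b t ->
    is_derive th t ((x t * Y t - y t * X t) / (x t ^ 2 + y t ^ 2)) /\
    x t = sqrt (x t ^ 2 + y t ^ 2) * cos (th t) /\
    y t = sqrt (x t ^ 2 + y t ^ 2) * sin (th t).
Proof.
  intros Hab Hd.
  destruct (in_I_ex a b Hab) as [t0 Ht0].
  set (W := fun s => (x s * Y s - y s * X s) / (x s ^ 2 + y s ^ 2)).
  assert (HW : forall t, in_I a b t -> continuity_pt W t).
  { intros t Ht. destruct (Hd t Ht) as (Hx & Hy & HX & HY & Hp).
    pose proof (cont_of_der _ _ _ Hx) as Cx. pose proof (cont_of_der _ _ _ Hy) as Cy.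
    unfold W. apply continuity_pt_div.
    - apply continuity_pt_minus; apply continuity_pt_mult; auto.
    - apply continuity_pt_plus; apply continuity_pt_mult; auto;
      apply continuity_pt_mult; auto; apply continuity_pt_const; intros u v; auto.
    - lra. }
  destruct (Hd t0 Ht0) as (_ & _ & _ & _ & Hp0).
  destruct (polar_ex (x t0) (y t0) Hp0) as [th0 [E1 E2]].
  set (th := fun s => th0 + RInt W t0 s).
  assert (Hth : forall t, in_I a b t -> is_derive th t (W t)).
  { intros t Ht.
    assert (HF : is_derive (fun s => RInt W t0 s) t (W t)).
    { apply is_derive_RInt with (a := t0).
      - apply (filter_imp (in_I a b)); [|apply in_I_open; auto].
        intros s Hs. apply (RInt_correct (V:=R_CompleteNormedModule)).
        apply ex_RInt_continuous. intros z Hz. apply cont_pt_to. apply HW.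
        destruct (Rle_or_lt t0 s).
        + rewrite Rmin_left, Rmax_right in Hz by lra. apply (in_I_conv a b t0 s); auto.
        + rewrite Rmin_right, Rmax_left in Hz by lra. apply (in_I_conv a b s t0); auto.
      - apply cont_pt_to. auto. }
    pose proof (is_derive_plus _ _ t 0 (W t) (is_derive_const th0 t) HF) as K.
    replace (W t) with (plus 0 (W t)) by (apply (plus_zero_l (G:=R_AbelianMonoid))). exact K. }
  exists th. intros t Ht. split; [apply Hth; auto|].
  set (g1 := fun s => (cos (th s) * x s + sin (th s) * y s) / sqrt (x s ^ 2 + y s ^ 2)).
  set (g2 := fun s => (cos (th s) * y s - sin (th s) * x s) / sqrt (x s ^ 2 + y s ^ 2)).
  assert (D1 : forall u, in_I a b u -> is_derive g1 u 0 /\ is_derive g2 u 0).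
  { intros u Hu. destruct (Hd u Hu) as (Hx & Hy & _ & _ & Hp).
    pose proof (Hth u Hu) as Ht'.
    assert (Hs : 0 < sqrt (x u ^ 2 + y u ^ 2)) by (apply sqrt_lt_R0; auto).
    assert (Hs2 : sqrt (x u ^ 2 + y u ^ 2) * sqrt (x u ^ 2 + y u ^ 2) = x u ^ 2 + y u ^ 2)
      by (apply sqrt_sqrt; lra).
    split; unfold g1, g2; auto_derive.
    all: try (repeat split; try (eexists; eassumption); try (simpl; lra);
              try (replace (x u * (x u * 1) + y u * (y u * 1)) with (x u ^ 2 + y u ^ 2) by ring; lra)).
    all: replace (Derive (fun x0 => x x0) u) with (X u) by (symmetry; apply is_derive_unique; auto);
         replace (Derive (fun x0 => y x0) u) with (Y u) by (symmetry; apply is_derive_unique; auto);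
         replace (Derive (fun x0 => th x0) u) with (W u) by (symmetry; apply is_derive_unique; auto);
         unfold W;
         replace (x u * (x u * 1) + y u * (y u * 1)) with (x u ^ 2 + y u ^ 2) by ring;
         set (S := sqrt (x u ^ 2 + y u ^ 2)) in *;
         rewrite Hs2; clearbody S; field; split; lra. }
  assert (G1 : g1 t = g1 t0) by (apply (const_I a b); auto; intros; apply D1; auto).
  assert (G2 : g2 t = g2 t0) by (apply (const_I a b); auto; intros; apply D1; auto).
  assert (th t0 = th0) by (unfold th; rewrite RInt_point; exact (Rplus_0_r th0)).
  destruct (Hd t Ht) as (_ & _ & _ & _ & Hp).
  assert (Hs : 0 < sqrt (x t ^ 2 + y t ^ 2)) by (apply sqrt_lt_R0; auto).
  assert (Hs0 : 0 < sqrt (x t0 ^ 2 + y t0 ^ 2)) by (apply sqrt_lt_R0; auto).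
  assert (g1 t0 = 1).
  { unfold g1. rewrite H. set (S := sqrt (x t0 ^ 2 + y t0 ^ 2)) in *. rewrite E1, E2 at 1.
    pose proof (sin2_cos2 th0). unfold Rsqr in *.
    replace ((cos th0 * (S * cos th0) + sin th0 * (S * sin th0)) / S) with (sin th0 * sin th0 + cos th0 * cos th0) by (field; lra).
    exact H0. }
  assert (g2 t0 = 0).
  { unfold g2. rewrite H. set (S := sqrt (x t0 ^ 2 + y t0 ^ 2)) in *. rewrite E1, E2 at 1.
    field. lra. }
  rewrite H0 in G1; rewrite H1 in G2. unfold g1, g2 in G1, G2.
  set (S := sqrt (x t ^ 2 + y t ^ 2)) in *.
  pose proof (sin2_cos2 (th t)). unfold Rsqr in *.
  assert (A1 : cos (th t) * x t + sin (th t) * y t = S).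
  { apply (Rmult_eq_reg_r (/ S)); [|apply Rinv_neq_0_compat; lra]. rewrite Rinv_r by lra. exact G1. }
  assert (A2 : cos (th t) * y t - sin (th t) * x t = 0).
  { apply (Rmult_eq_reg_r (/ S)); [|apply Rinv_neq_0_compat; lra]. rewrite Rmult_0_l. exact G2. }
  set (c := cos (th t)) in *. set (sn := sin (th t)) in *.
  assert (B1 : x t * (sn * sn + c * c) = c * (c * x t + sn * y t) - sn * (c * y t - sn * x t)) by ring.
  assert (B2 : y t * (sn * sn + c * c) = sn * (c * x t + sn * y t) + c * (c * y t - sn * x t)) by ring.
  rewrite H2, A1, A2, Rmult_1_r in B1, B2. split; lra.
Qed.

Lemma dHp1 mu a b c d : is_derive (fun x => H mu a b x d) c (c - b).
Proof. unfold H. auto_derive; auto. field. Qed.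
Lemma dHp2 mu a b c d : is_derive (fun x => H mu a b c x) d (d + a).
Proof. unfold H. auto_derive; auto. field. Qed.

Lemma polar_rot x y t r th : x = r * cos th -> y = r * sin th ->
  cos t * x + sin t * y = r * cos (th - t) /\ - sin t * x + cos t * y = r * sin (th - t).
Proof. intros -> ->. rewrite cos_minus, sin_minus. split; ring. Qed.

Lemma norm_rot x y t : (cos t * x + sin t * y) ^ 2 + (- sin t * x + cos t * y) ^ 2 = x ^ 2 + y ^ 2.
Proof.
  pose proof (sin2_cos2 t) as E. unfold Rsqr in E.
  replace ((cos t * x + sin t * y) ^ 2 + (- sin t * x + cos t * y) ^ 2)
    with ((sin t * sin t + cos t * cos t) * (x ^ 2 + y ^ 2)) by ring.
  rewrite E; ring.
Qed.

Theorem proposition2p1 (mu : R) (a b : Rbar) (q1 q2 p1 p2 : R -> R) :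
  0 <= mu <= 1 ->
  Rbar_lt a b ->
  is_orbit mu a b q1 q2 p1 p2 ->
  ((forall t, in_I a b t ->
      (q1 t + mu) * p2 t - q2 t * p1 t > mu * (q1 t + mu)) ->
    retrograde mu a b q1 q2) /\
  ((forall t, in_I a b t ->
      (q1 t + mu) * p2 t - q2 t * p1 t < mu * (q1 t + mu)) ->
    prograde mu a b q1 q2).
Proof.
  intros Hmu Hab Horb.
  assert (Hd : forall t, in_I a b t ->
    is_derive (fun s => q1 s + mu) t (p1 t - q2 t) /\ is_derive q2 t (p2 t + q1 t) /\
    continuity_pt (fun s => p1 s - q2 s) t /\ continuity_pt (fun s => p2 s + q1 s) t /\
    0 < (q1 t + mu) ^ 2 + q2 t ^ 2).
  { intros t Ht.
    destruct (Horb t Ht) as (N1 & N2 & [v1 [D1 E1]] & [v2 [D2 E2]] & [v3 [D3 _]] & [v4 [D4 _]]).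
    assert (V1 : v1 = p1 t - q2 t)
      by (rewrite <- (is_derive_unique _ _ _ E1); apply is_derive_unique, dHp1).
    assert (V2 : v2 = p2 t + q1 t)
      by (rewrite <- (is_derive_unique _ _ _ E2); apply is_derive_unique, dHp2).
    subst v1 v2.
    split; [|split; [exact D2|split; [|split]]].
    - auto_derive. { exists (p1 t - q2 t); exact D1. }
      replace (Derive (fun x => q1 x) t) with (p1 t - q2 t) by (symmetry; apply is_derive_unique; exact D1). ring.
    - apply continuity_pt_minus; [apply (cont_of_der _ _ _ D3) | apply (cont_of_der _ _ _ D2)].
    - apply continuity_pt_plus; [apply (cont_of_der _ _ _ D4) | apply (cont_of_der _ _ _ D1)].
    - destruct (Req_dec (q1 t + mu) 0) as [Z1|Z1].
      + destruct (Req_dec (q2 t) 0) as [Z2|Z2].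
        * exfalso. apply N1. f_equal; lra.
        * pose proof (Rsqr_pos_lt _ Z2). pose proof (Rle_0_sqr (q1 t + mu)). unfold Rsqr in *. nra.
      + pose proof (Rsqr_pos_lt _ Z1). pose proof (Rle_0_sqr (q2 t)). unfold Rsqr in *. nra. }
  destruct (lift a b (fun s => q1 s + mu) q2 (fun s => p1 s - q2 s) (fun s => p2 s + q1 s) Hab Hd)
    as [th Hth].
  set (phi := fun s => th s - s).
  set (dphi := fun t => ((q1 t + mu) * p2 t - q2 t * p1 t - mu * (q1 t + mu)) / ((q1 t + mu) ^ 2 + q2 t ^ 2)).
  assert (Dphi : forall t, in_I a b t -> is_derive phi t (dphi t)).
  { intros t Ht. destruct (Hth t Ht) as [Dt _]. destruct (Hd t Ht) as (_ & _ & _ & _ & Hp).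
    unfold phi. auto_derive. { eexists; exact Dt. }
    replace (Derive (fun x => th x) t) with (((q1 t + mu) * (p2 t + q1 t) - q2 t * (p1 t - q2 t)) / ((q1 t + mu) ^ 2 + q2 t ^ 2)) by (symmetry; apply is_derive_unique; exact Dt). unfold dphi. field. lra. }
  assert (Lift : is_angle_lift mu a b q1 q2 phi).
  { intros t Ht. split.
    - apply (ex_derive_continuous (K:=R_AbsRing) (V:=R_NormedModule)). exists (dphi t); auto.
    - destruct (Hth t Ht) as (_ & Px & Py). cbv zeta.
      replace (fst (qbar q1 q2 t) - fst (ebar mu t)) with (cos t * (q1 t + mu) + sin t * q2 t)
        by (unfold qbar, ebar, rot; simpl; rewrite cos_neg, sin_neg; ring).
      replace (snd (qbar q1 q2 t) - snd (ebar mu t)) with (- sin t * (q1 t + mu) + cos t * q2 t)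
        by (unfold qbar, ebar, rot; simpl; rewrite cos_neg, sin_neg; ring).
      rewrite norm_rot. unfold phi.
      apply polar_rot; auto. }
  split; intros Hc.
  - exists phi; split; auto.
    apply (incr_I a b phi dphi). intros u Hu. split; auto.
    destruct (Hd u Hu) as (_ & _ & _ & _ & Hp). specialize (Hc u Hu).
    unfold dphi. apply Rdiv_lt_0_compat; lra.
  - exists phi; split; auto.
    intros s t Hs Ht Hst.
    assert (- phi s < - phi t); [|lra].
    apply (incr_I a b (fun s => - phi s) (fun s => - dphi s)); auto.
    intros u Hu. split.
    + apply (is_derive_opp phi). auto.
    + destruct (Hd u Hu) as (_ & _ & _ & _ & Hp). specialize (Hc u Hu).
      unfold dphi. assert (0 < (mu * (q1 u + mu) - ((q1 u + mu) * p2 u - q2 u * p1 u)) / ((q1 u + mu) ^ 2 + q2 u ^ 2)) by (apply Rdiv_lt_0_compat; lra).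
      replace (- (((q1 u + mu) * p2 u - q2 u * p1 u - mu * (q1 u + mu)) / ((q1 u + mu) ^ 2 + q2 u ^ 2)))
        with ((mu * (q1 u + mu) - ((q1 u + mu) * p2 u - q2 u * p1 u)) / ((q1 u + mu) ^ 2 + q2 u ^ 2)) by (field; lra).
      auto.
Qed.
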